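(* For $n\ge1$ and $r\ge0$, the number of simple two-dimensional lattice paths of length $n$ with compactification degree $r$ is \[ 4^{r+1}\sum_{\lambda\ge0}\lambda(-1)^{\lambda-1}\bigg[\binom{2n-1}{n-\lambda2^r}-\binom{2n-1}{n-\lambda2^r-1}\bigg], \] where binomial coefficients with negative lower index are $0$.
   Context: A simple two-dimensional lattice path is a finite nonempty word over the steps $\{\uparrow,\rightarrow,\downarrow,\leftarrow\}$; its length is the number of steps. The reduction $\Phi_L(\ell)$ of a path $\ell$ of length $\ge2$ is defined as follows. First, if the first step of $\ell$ is vertical, the entire path is rotated by $90^\circ$ clockwise; then, if the last step of the resulting path is horizontal, this last step alone is rotated by $90^\circ$ clockwise. The resulting path starts with a horizontal and ends with a vertical step, so it decomposes uniquely as $H_1V_1H_2V_2\cdots H_kV_k$ ($k\ge1$), where each $H_i$ is a nonempty maximal run of horizontal steps and each $V_i$ a nonempty maximal run of vertical steps. Each block $H_iV_i$ is replaced by one diagonal step: $\nearrow$ if $H_i$ starts with $\rightarrow$ and $V_i$ starts with $\uparrow$; $\searrow$ if $H_i$ starts with $\rightarrow$ and $V_i$ with $\downarrow$; $\swarrow$ if $H_i$ starts with $\leftarrow$ and $V_i$ with $\downarrow$; $\nwarrow$ if $H_i$ starts with $\leftarrow$ and $V_i$ with $\uparrow$. Finally this diagonal path is rotated by $45^\circ$ clockwise, giving a simple lattice path $\Phi_L(\ell)$ of length $k$. The compactification degree $\mathrm{cdeg}(\ell)$ of a path $\ell$ of length $\ge1$ is the number $m\ge0$ such that $\Phi_L^m(\ell)$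 consists of a single step. *)

(* Defs.v *)
From HB Require Import structures.
From mathcomp Require Import all_boot all_order all_algebra.
Set Implicit Arguments. Unset Strict Implicit. Unset Printing Implicit Defensive.
Import GRing.Theory Num.Theory.

Inductive dir := U | R | D | L.

Definition dir_enc (d : dir) : 'I_4 :=
  match d with U => inord 0 | R => inord 1 | D => inord 2 | L => inord 3 end.
Definition dir_dec (i : 'I_4) : dir :=
  match val i with 0 => U | 1 => R | 2 => D | _ => L end.
Lemma dir_encK : cancel dir_enc dir_dec.
Proof. by case; rewrite /dir_dec /= inordK. Qed.
HB.instance Definition _ := Finite.copy dir (can_type dir_encK).

(* A simple lattice path is a word over dir (nonemptiness imposed where used). *)
Definition lpath := seq dir.

Definition horizontal (d : dir) : bool := match d with R | L => true | _ => false end.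
Definition vertical (d : dir) : bool := ~~ horizontal d.

Definition rot (d : dir) : dir := match d with U => R | R => D | D => L | L => U end.

(* first letters of the maximal runs of equally oriented steps *)
Fixpoint heads (prev : dir) (s : lpath) : lpath :=
  match s with
  | [::] => [::]
  | x :: s' => if horizontal x == horizontal prev then heads x s' else x :: heads x s'
  end.
Definition runheads (s : lpath) : lpath :=
  match s with [::] => [::] | x :: s' => x :: heads x s' end.

(* block H_i V_i with given first letters -> diagonal step, then rotated by
   45 degrees clockwise:  NE -> R, SE -> D, SW -> L, NW -> U *)
Definition diag_rot (h v : dir) : dir :=
  match h, v with
  | R, U => R | R, D => D | L, D => L | L, U => U
  | _, _ => R (* never used: h horizontal, v vertical *)
  end.

Fixpoint pairup (s : lpath) : lpath :=
  match s with h :: v :: t => diag_rot h v :: pairup t | _ => [::] end.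

(* the reduction Phi_L (meaningful for paths of length >= 2) *)
Definition PhiL (s : lpath) : lpath :=
  let s1 := if vertical (head U s) then map rot s else s in
  let s2 := if horizontal (last U s1) then rcons (belast (head U s1) (behead s1)) (rot (last U s1))
            else s1 in
  pairup (runheads s2).

Definition has_cdeg (l : lpath) (m : nat) : bool :=
  (size (iter m PhiL l) == 1) && [forall k : 'I_m, size (iter k PhiL l) != 1].

Definition binomz (m : nat) (k : int) : int :=
  match k with Posz k' => ('C(m, k'))%:Z | Negz _ => 0 end.

(* Main.v *)
Require Import Defs.
From HB Require Import structures.
From mathcomp Require Import all_boot all_order all_algebra.
From mathcomp Require Import zify ring lra.
Import GRing.Theory Num.Theory.
Local Open Scope ring_scope.

Lemma binomz_neg m k : k < 0 -> binomz m k = 0.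
Proof. by case: k. Qed.

Lemma binomzS m k : binomz m.+1 k = binomz m k + binomz m (k - 1).
Proof.
case: k => [[|k]|k] /=.
- by rewrite !bin0 addr0.
- by rewrite subn1 /= binS PoszD addrC.
- by rewrite addr0.
Qed.

Definition bb (n j : nat) : int :=
  binomz (2 * n - 1) (n%:Z - j%:Z) - binomz (2 * n - 1) (n%:Z - j%:Z - 1).

Lemma bb0j j : bb 0 j = (j == 0%N)%:Z.
Proof. by case: j. Qed.

Lemma bb_gt n j : (n < j)%N -> bb n j = 0.
Proof.
move=> h; rewrite /bb !binomz_neg ?subr0 //; lia.
Qed.

Lemma bbn0 n : bb n 0 = (n == 0%N)%:Z.
Proof.
case: n => [//|n]; rewrite /bb.
have -> : (2 * n.+1 - 1 = n.*2.+1)%N by lia.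
have -> : (Posz n.+1 - Posz 0 = Posz n.+1) by lia.
have -> : (Posz n.+1 - 1 = Posz n) by lia.
rewrite /=.
rewrite -(@bin_sub n.*2.+1 n.+1); last by lia.
have -> : (n.*2.+1 - n.+1 = n)%N by lia.
by rewrite subrr.
Qed.

Lemma bbS n j : bb n.+1 j.+1 = bb n j + 2 * bb n j.+1 + bb n j.+2.
Proof.
case: n => [|n].
  rewrite !bb0j /bb; case: j => [|j] //=.
rewrite /bb.
have -> : (2 * n.+2 - 1 = (2 * n.+1 - 1).+2)%N by lia.
set m := (2 * n.+1 - 1)%N.
set x := (Posz n.+1 - Posz j).
have -> : Posz n.+2 - Posz j.+1 = x by rewrite /x; lia.
have -> : Posz n.+1 - Posz j.+1 = x - 1 by rewrite /x; lia.
have -> : Posz n.+1 - Posz j.+2 = x - 1 - 1 by rewrite /x; lia.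
rewrite !binomzS.
ring.
Qed.

Definition ddn (n m : nat) : nat :=
  match n, m with
  | 0, 0 => 1 | 0, _ => 0 | _, 0 => 0
  | n'.+1, m'.+1 => (2 ^ (n' - m') * 'C(n', m'))%N end.

Lemma ddnS n m : ddn n.+1 m.+1 = (2 * ddn n m.+1 + ddn n m)%N.
Proof.
case: n => [|n]; first by case: m.
case: m => [|m] /=.
  by rewrite !subn0 !bin0 !muln1 addn0 expnS.
rewrite subSS binS.
case: (ltnP m n) => h.
  have -> : (n - m = (n - m.+1).+1)%N by lia.
  rewrite expnS; ring.
rewrite (bin_small (n:=n) (m:=m.+1)); last by lia.
ring.
Qed.

Lemma ddn_gt n m : (n < m)%N -> ddn n m = 0%N.
Proof.
case: n => [|n]; case: m => [|m] //= h.
by rewrite bin_small ?muln0 //; lia.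
Qed.

Lemma ddn_n0 n : ddn n.+1 0 = 0%N.
Proof. by []. Qed.

Lemma telesc (c : nat -> int) N :
  \sum_(i < N) (-1) ^+ i * (c i + c i.+1) = c 0%N - (-1) ^+ N * c N.
Proof.
elim: N => [|N IH]; first by rewrite big_ord0 expr0 mul1r subrr.
rewrite big_ord_recr /= IH exprS; ring.
Qed.

Definition Ob n j := \sum_(i < n.+1) (-1) ^+ i * bb n (2 * j + 2 * i).+1.

Lemma ObS n j : Ob n.+1 j = 2 * Ob n j + bb n (2 * j).
Proof.
rewrite /Ob.
under eq_bigr => i _ do rewrite bbS.
pose c i := bb n (2 * j + 2 * i).
have e : forall i : 'I_n.+2, (-1) ^+ i * (bb n (2 * j + 2 * i) + 2 * bb n (2 * j + 2 * i).+1 + bb n (2 * j + 2 * i).+2)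
   = (-1) ^+ i * (c i + c i.+1) + 2 * ((-1) ^+ i * bb n (2 * j + 2 * i).+1).
  move=> i; rewrite /c.
  have -> : (2 * j + 2 * i.+1 = (2 * j + 2 * i).+2)%N by lia.
  ring.
rewrite (eq_bigr _ (fun i _ => e i)) big_split /= telesc.
rewrite -mulr_sumr big_ord_recr /= (bb_gt n ((2 * j + 2 * n.+1).+1)); last by lia.
rewrite mulr0 addr0 /c muln0 addn0 (bb_gt n ((2 * j + 2 * n.+2))); last by lia.
ring.
Qed.

Lemma ObD n j : Ob n j + Ob n j.+1 = bb n (2 * j).+1.
Proof.
rewrite /Ob -big_split /=.
pose c i := bb n (2 * j + 2 * i).+1.
have e : forall i : 'I_n.+1, (-1) ^+ i * bb n (2 * j + 2 * i).+1 + (-1) ^+ i * bb n (2 * j.+1 + 2 * i).+1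
   = (-1) ^+ i * (c i + c i.+1).
  move=> i; rewrite /c.
  have -> : (2 * j.+1 + 2 * i = 2 * j + 2 * i.+1)%N by lia.
  ring.
rewrite (eq_bigr _ (fun i _ => e i)) telesc /c muln0 addn0.
rewrite (bb_gt n ((2 * j + 2 * n.+1).+1)); last by lia.
ring.
Qed.

Definition Es M n j := \sum_(k < M) (ddn n (2 * k))%:Z * bb k j.
Definition Os M n j := \sum_(k < M) (ddn n (2 * k).+1)%:Z * bb k j.

Lemma EO n : forall M j, (n < M)%N -> Es M n j = bb n (2 * j) /\ Os M n j = Ob n j.
Proof.
elim: n => [|n IH] M j hM.
  case: M hM => [//|M] _; rewrite /Es /Os /Ob big_ord_recl big_ord1 /=.
  rewrite big1 => [|i _]; last by rewrite mul0r.
  rewrite big1 => [|i _]; last by rewrite mul0r.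
  rewrite addr0 mul1r !bb0j; split; [by case: j | by []].
have hO : Os M n.+1 j = Ob n.+1 j.
  rewrite ObS /Os.
  under eq_bigr => i _ do rewrite ddnS PoszD PoszM mulrDl -mulrA.
  rewrite big_split /= -mulr_sumr.
  have [E O] := IH M j (ltnW hM).
  by rewrite -O -E.
split; last exact hO. clear hO.
case: j => [|j].
  rewrite bbn0 /Es big1 // => k _.
  by rewrite bbn0; case: (nat_of_ord k) => [|k'] //=; rewrite mulr0.
case: M hM => [//|M] hM.
rewrite /Es big_ord_recl /= mul0r add0r.
have e : forall k : 'I_M, (ddn n.+1 (2 * bump 0 k))%:Z * bb (bump 0 k) j.+1
   = 2 * ((ddn n (2 * bump 0 k))%:Z * bb (bump 0 k) j.+1)
     + ((ddn n (2 * k).+1)%:Z * bb k j + 2 * ((ddn n (2 * k).+1)%:Z * bb k j.+1)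
        + (ddn n (2 * k).+1)%:Z * bb k j.+2).
  move=> k; rewrite (_ : bump 0 k = k.+1) //.
  have -> : (2 * k.+1 = (2 * k).+1.+1)%N by lia.
  rewrite ddnS bbS PoszD PoszM; ring.
rewrite (eq_bigr _ (fun k _ => e k)) big_split /= -mulr_sumr !big_split /= -mulr_sumr.
have [E1 _] := IH M.+1 j.+1 (ltnW hM).
have [_ O0] := IH M j (ltnSE hM).
have [_ O1] := IH M j.+1 (ltnSE hM).
have [_ O2] := IH M j.+2 (ltnSE hM).
move: E1; rewrite /Es big_ord_recl /= bb0j /= mulr0 add0r => ->.
rewrite /Os in O0 O1 O2; rewrite O0 O1 O2.
have -> : Ob n j + 2 * Ob n j.+1 + Ob n j.+2 = (Ob n j + Ob n j.+1) + (Ob n j.+1 + Ob n j.+2) by ring.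
rewrite !ObD.
have -> : (2 * j.+1 = (2 * j).+1.+1)%N by lia.
rewrite bbS.
ring.
Qed.

Definition Asum r n := \sum_(0 <= lam < n.+1) (lam%:Z * (-1) ^+ (lam.-1) * bb n (lam * 2 ^ r)%N).

Lemma telesc2 (c : nat -> int) N :
  \sum_(i < N) (i.+1)%:Z * (-1) ^+ i * (c i + 2 * c i.+1 + c i.+2)
  = c 0%N - (-1) ^+ N * (N%:Z * c N.+1 + N.+1%:Z * c N).
Proof.
elim: N => [|N IH]; first by rewrite big_ord0 expr0 mul1r mul0r add0r mul1r subrr.
rewrite big_ord_recr /= IH exprS.
rewrite -?[N.+1]addn1 -?[N.+2]addn2 ?PoszD.
ring.
Qed.

Lemma A0 n : Asum 0 n = (n == 1%N)%:Z.
Proof.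
rewrite /Asum; case: n => [|n].
  by rewrite big_nat1 mul0r.
rewrite big_nat_recl // mul0r add0r big_mkord.
under eq_bigr => i _ do rewrite /= expn0 muln1 bbS.
rewrite telesc2 (bb_gt n n.+2) // (bb_gt n n.+1) // !mulr0 ?addr0 ?mulr0 ?subr0 bbn0; by case: n.
Qed.

Lemma Asum_wide r k n : (k <= n)%N ->
  Asum r k = \sum_(0 <= lam < n.+1) (lam%:Z * (-1) ^+ (lam.-1) * bb k (lam * 2 ^ r)%N).
Proof.
move=> hk; rewrite /Asum [RHS](@big_cat_nat _ _ _ k.+1 0 n.+1) //=.
rewrite [X in _ = _ + X]big_nat_cond [X in _ = _ + X]big1 ?addr0 // => i /andP [/andP [h1 h2] _].
rewrite bb_gt ?mulr0 //.
have : (1 <= 2 ^ r)%N by rewrite expn_gt0.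
nia.
Qed.

Lemma Arec r n : Asum r.+1 n = \sum_(k < n.+1) (ddn n (2 * k))%:Z * Asum r k.
Proof.
rewrite [RHS](eq_bigr (fun k : 'I_n.+1 => \sum_(0 <= lam < n.+1)
   ((ddn n (2 * k))%:Z * (lam%:Z * (-1) ^+ (lam.-1) * bb k (lam * 2 ^ r)%N)))); last first.
  by move=> k _; rewrite (@Asum_wide r k n) ?mulr_sumr // -ltnS.
rewrite exchange_big /Asum /=.
apply: eq_bigr => lam _.
have [E _] := EO n n.+1 (lam * 2 ^ r) (ltnSn n).
under eq_bigr => k _ do rewrite mulrCA.
rewrite -mulr_sumr.
congr (_ * _).
rewrite /Es in E; rewrite E expnS; congr bb; ring.
Qed.
Definition dirs : seq dir := [:: U; R; D; L].
Fixpoint words (n : nat) : seq (seq dir) :=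
  if n is n'.+1 then [seq x :: w | x <- dirs, w <- words n'] else [:: [::]].
Lemma count_wordsS (P : pred (seq dir)) n : count P (words n.+1) =
  (count (fun w => P (U :: w)) (words n) + count (fun w => P (R :: w)) (words n)
  + count (fun w => P (D :: w)) (words n) + count (fun w => P (L :: w)) (words n))%N.
Proof. by rewrite /= !count_cat !count_map /= addn0 !addnA. Qed.
Definition dir_beq (a b : dir) : bool :=
  match a, b with U,U | R,R | D,D | L,L => true | _,_ => false end.
Lemma dir_eqE a b : (a == b) = dir_beq a b.
Proof. apply/eqP/idP; [by move=> ->; case: b | by case: a; case: b]. Qed.
Lemma in_dirs x : x \in dirs. Proof. by case: x; rewrite /dirs !in_cons eqxx ?orbT. Qed.
Lemma mem_words n w : (w \in words n) = (size w == n).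
Proof.
elim: n w => [|n IH] w.
  by rewrite /= in_cons in_nil orbF; case: w.
change (words n.+1) with [seq x :: w | x <- dirs, w <- words n].
apply/allpairsPdep/idP => [[a [b [_ hb ->]]]|hw].
  by rewrite /= eqSS -IH.
case: w hw => [//|x w] hw.
by exists x, w; rewrite in_dirs IH.
Qed.
Lemma uniq_dirs : uniq dirs.
Proof. by rewrite /= !in_cons !dir_eqE. Qed.
Lemma uniq_words n : uniq (words n).
Proof.
elim: n => [//|n IH].
change (words n.+1) with [seq x :: w | x <- dirs, w <- words n].
apply: allpairs_uniq => //; first exact: uniq_dirs.
by move=> [a b] [c d] _ _ /= [-> ->].
Qed.
Lemma card_words (P : pred (seq dir)) n :
  #|[set t : n.-tuple dir | P (tval t)]| = count P (words n).
Proof.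
rewrite cardsE cardE /enum_mem size_filter -enumT.
transitivity (count P (map val (enum {: n.-tuple dir}))).
  by rewrite [in RHS]count_map enumT; apply: eq_in_count => t _.
have hp : perm_eq (map val (enum {: n.-tuple dir})) (words n).
  apply: uniq_perm.
  - by rewrite map_inj_uniq ?enum_uniq //; exact: val_inj.
  - exact: uniq_words.
  move=> w; rewrite mem_words; apply/mapP/idP => [[t _ ->]|hw].
    by rewrite size_tuple.
  by exists (Tuple hw); rewrite ?mem_enum.
by move/permP: hp => ->.
Qed.

Definition fixlast (y : lpath) : lpath :=
  if horizontal (last U y) then rcons (belast (head U y) (behead y)) (Defs.rot (last U y)) else y.

Lemma PhiL_cons x y : y != [::] -> PhiL (x :: y) =
  if horizontal x then pairup (x :: heads x (fixlast y))
  else pairup (Defs.rot x :: heads (Defs.rot x) (fixlast (map Defs.rot y))).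
Proof.
case: y => [//|a t] _.
rewrite /PhiL /fixlast /=.
case: x => /=; case: (horizontal _) => //.
Qed.

Fixpoint validO (o : bool) (h : seq dir) : bool :=
  match h with [::] => ~~ o | b :: h' => (o != horizontal b) && validO (horizontal b) h' end.

Lemma fixlast_cons a t : t != [::] -> fixlast (a :: t) = a :: fixlast t.
Proof.
case: t => [//|b t] _; rewrite /fixlast /=.
by case: (horizontal _).
Qed.

Lemma count_false (T : Type) (s : seq T) : count (fun _ => false) s = 0%N.
Proof. by elim: s. Qed.

Lemma eq_nil_cons (x : dir) s : ([::] == x :: s) = false. Proof. by []. Qed.
Lemma eq_cons_nil (x : dir) s : (x :: s == [::]) = false. Proof. by []. Qed.

Lemma count_step p a h (W : seq lpath) (F : lpath -> lpath) :
  count (fun w => heads p (a :: F w) == h) W =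
  if horizontal a == horizontal p then count (fun w => heads a (F w) == h) W
  else (if h is b :: h' then (if a == b then count (fun w => heads a (F w) == h') W else 0%N) else 0%N).
Proof.
rewrite /=; case: ifP => e.
  by [].
case: h => [|b h']; first exact: count_false.
case: ifP => ab.
  by apply: eq_count => w; rewrite eqseq_cons ab.
by rewrite -(@count_false lpath W); apply: eq_count => w; rewrite eqseq_cons ab.
Qed.

Arguments ddn : simpl never.
Arguments words : simpl never.

Lemma count_heads n : forall p h,
  count (fun y => heads p (fixlast y) == h) (words n.+1) =
  if validO (horizontal p) h then (2 * ddn n.+2 (size h).+1)%N else 0%N.
Proof.
elim: n => [|n IH] p h.
  case: p; case: h => [|b [|c h']]; try case: b;
  rewrite /ddn /= ?eqseq_cons ?eq_nil_cons ?eq_cons_nil ?dir_eqE ?andbF //=;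
  by rewrite bin_small // !muln0; case: ifP.
rewrite count_wordsS.
have e : forall a, count (fun w => heads p (fixlast (a :: w)) == h) (words n.+1)
   = count (fun w => heads p (a :: fixlast w) == h) (words n.+1).
  move=> a; apply: eq_in_count => w; rewrite mem_words => /eqP hw.
  by rewrite fixlast_cons // -size_eq0 hw.
rewrite !e !count_step; clear e.
case: p; case: h => [|b h']; try case: b; rewrite /= ?dir_eqE /= ?IH /=;
  rewrite ?(ddnS n.+2) ?ddn_n0; first [lia | case: ifP => _; lia].
Qed.

Lemma heads_validO p z : validO (horizontal p) (heads p z) = vertical (last p z).
Proof.
elim: z p => [|a z IH] p /=; first by [].
case: ifP => e.
  by rewrite -(eqP e) IH.
rewrite /= IH.
by move: e; case: (horizontal a); case: (horizontal p).
Qed.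

Lemma fixlast_vert x y : y != [::] -> vertical (last x (fixlast y)).
Proof.
case: y => [//|a t] _; rewrite /fixlast /=.
case: ifP => h.
  by rewrite last_rcons; move: h; case: (last a t).
by rewrite /vertical h.
Qed.

Definition uh (c : dir) : dir := match c with R | D => R | _ => L end.
Definition uv (c : dir) : dir := match c with R | U => U | _ => D end.
Fixpoint unpair (w : seq dir) : seq dir :=
  if w is c :: w' then uh c :: uv c :: unpair w' else [::].

Lemma size_unpair w : size (unpair w) = (2 * size w)%N.
Proof. elim: w => [//|c w IH] /=; rewrite IH; lia. Qed.

Lemma validO_unpair w : validO false (unpair w).
Proof. by elim: w => [//|c w IH]; case: c. Qed.

Lemma diag_ok x v c : horizontal x -> ~~ horizontal v ->
  (diag_rot x v == c) = (x == uh c) && (v == uv c).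
Proof. by case: x; case: v; case: c; rewrite /= ?dir_eqE. Qed.

Lemma pairup_good w : forall x H, horizontal x -> validO true H ->
  (pairup (x :: H) == w) = (x :: H == unpair w).
Proof.
elim: w => [|c w IH] x [|v H] hx //= /andP [hv hH].
rewrite !eqseq_cons.
have hv' : ~~ horizontal v by move: hv; case: (horizontal v).
rewrite (negbTE hv') in hH.
case: H hH => [|y H'] hH /=.
  rewrite diag_ok // andbA; congr (_ && _).
  by case: w {IH} => [|c' w'] /=; rewrite ?eq_nil_cons ?andbF ?andbT.
move: hH => /= /andP [hy hH'].
have hy' : horizontal y by move: hy; case: (horizontal y).
rewrite hy' in hH'.
rewrite diag_ok // -andbA IH //.
Qed.

Lemma rot4 d : Defs.rot (Defs.rot (Defs.rot (Defs.rot d))) = d.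
Proof. by case: d. Qed.

Lemma perm_rot m : perm_eq (map (map Defs.rot) (words m)) (words m).
Proof.
apply: uniq_perm; last first.
- move=> w; rewrite mem_words; apply/mapP/idP => [[y hy ->]|hw].
    by rewrite size_map -mem_words.
  exists (map (fun d => Defs.rot (Defs.rot (Defs.rot d))) w).
    by rewrite mem_words size_map.
  by rewrite -map_comp; elim: w {hw} => [//|a w IH] /=; rewrite rot4 -IH.
- exact: uniq_words.
rewrite map_inj_uniq ?uniq_words //.
apply: inj_map => a b e.
by rewrite -(rot4 a) e rot4.
Qed.

Lemma count_rot (P : pred lpath) m :
  count (fun w => P (map Defs.rot w)) (words m) = count P (words m).
Proof.
have := perm_rot m; move/permP => h.
by rewrite -[RHS]h count_map.
Qed.

Lemma validO_uv c w : validO true (uv c :: unpair w).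
Proof. by case: c; rewrite /= validO_unpair. Qed.

Lemma fib n c w : count (fun s => PhiL s == c :: w) (words n.+2) = (4 * ddn n.+2 (2 * (size w).+1))%N.
Proof.
pose cx x := count (fun y => pairup (x :: heads x (fixlast y)) == c :: w) (words n.+1).
have e : forall a, count (fun y => PhiL (a :: y) == c :: w) (words n.+1) =
    if horizontal a then cx a else cx (Defs.rot a).
  move=> a; case ha: (horizontal a).
    apply: eq_in_count => y; rewrite mem_words => /eqP hy.
    by rewrite PhiL_cons ?ha // -size_eq0 hy.
  rewrite /cx -(count_rot _ n.+1).
  apply: eq_in_count => y; rewrite mem_words => /eqP hy.
  by rewrite PhiL_cons ?ha // -size_eq0 hy.
rewrite count_wordsS !e /=.
have ec : forall x, horizontal x -> cx x = count (fun y => (x == uh c) && (heads x (fixlast y) == uv c :: unpair w)) (words n.+1).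
  move=> x hx; apply: eq_in_count => y; rewrite mem_words => /eqP hy.
  rewrite pairup_good //=.
  have := heads_validO x (fixlast y); rewrite hx => ->.
  by apply: fixlast_vert; rewrite -size_eq0 hy.
rewrite !ec //.
have hv := validO_uv c w.
clear e ec cx.
have e2 : (2 * (size w).+1 = (2 * size w).+2)%N by lia.
case: c hv => /= hv; rewrite /= ?dir_eqE /= ?count_false !count_heads /= hv size_unpair e2; set t := ddn _ _; lia.
Qed.

Lemma has_cdeg_iota l m : has_cdeg l m =
  (size (iter m PhiL l) == 1%N) && all (fun k => size (iter k PhiL l) != 1%N) (iota 0 m).
Proof.
rewrite /has_cdeg; congr (_ && _).
apply/forallP/allP => [H k | H k].
  by rewrite mem_iota add0n => /andP [_ hk]; exact: (H (Ordinal hk)).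
by apply: H; rewrite mem_iota add0n ltn_ord.
Qed.

Lemma cdeg0 l : has_cdeg l 0 = (size l == 1%N).
Proof. by rewrite has_cdeg_iota /= andbT. Qed.

Lemma cdegS l r : (2 <= size l)%N -> has_cdeg l r.+1 = has_cdeg (PhiL l) r.
Proof.
move=> hl; rewrite !has_cdeg_iota iterSr.
rewrite /= -[1%N]addn0 (iotaDl 1 0 r) all_map.
have -> : (size l != 1%N) by rewrite neq_ltn hl orbT.
rewrite andTb; congr (_ && _).
by apply: eq_all => k /=; rewrite add0n -iterS iterSr.
Qed.

Lemma cdeg_size1 l r : size l = 1%N -> has_cdeg l r.+1 = false.
Proof. by move=> hl; rewrite has_cdeg_iota /= hl andbF. Qed.

Lemma PhiL_nil : PhiL [::] = [::].
Proof. by []. Qed.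

Lemma cdeg_nil r : has_cdeg [::] r = false.
Proof.
rewrite /has_cdeg.
have -> : iter r PhiL [::] = [::] by elim: r => [//|r IH]; rewrite iterS IH.
by [].
Qed.

Lemma size_heads p s : (size (heads p s) <= size s)%N.
Proof.
elim: s p => [//|a s IH] p /=.
case: ifP => _ /=; last by rewrite ltnS.
exact: leq_trans (IH a) (leqnSn _).
Qed.

Lemma size_pairup_aux m : forall l : lpath, (size l <= m)%N -> (size (pairup l) <= size l)%N.
Proof.
elim: m => [|m IH] [|h [|v t]] //= hl.
rewrite ltnS; apply: leq_trans (IH t _) _; first by lia.
by lia.
Qed.

Lemma size_pairup l : (size (pairup l) <= size l)%N.
Proof. exact: (@size_pairup_aux (size l)). Qed.

Lemma size_PhiL s : (size (PhiL s) <= size s)%N.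
Proof.
rewrite /PhiL.
set s1 := (if vertical (head U s) then map Defs.rot s else s).
have h1 : size s1 = size s by rewrite /s1; case: ifP; rewrite ?size_map.
set s2 := (if horizontal (last U s1) then _ else s1).
have h2 : size s2 = size s1.
  rewrite /s2; case: (s1) => [//|a t] /=; case: ifP => // _.
  by rewrite size_rcons size_belast.
apply: leq_trans (size_pairup _) _.
rewrite -h1 -h2; case: (s2) => [//|a t] /=.
by rewrite ltnS size_heads.
Qed.

Lemma sum_single (s : seq lpath) (F : lpath -> nat) v : uniq s ->
  (\sum_(w <- s) F w * (v == w))%N = ((v \in s) * F v)%N.
Proof.
elim: s => [|a s IH]; first by rewrite big_nil.
move=> /= /andP [ha hs]; rewrite big_cons IH // in_cons.
case: eqP => [->|_] /=; last by rewrite muln0.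
by rewrite (negbTE ha) muln1 addn0 mul1n.
Qed.

Lemma sum_words_single (F : lpath -> nat) v N : (size v <= N)%N ->
  (\sum_(k < N.+1) \sum_(w <- words k) F w * (v == w))%N = F v.
Proof.
move=> hv.
under eq_bigr => k _ do rewrite sum_single ?uniq_words // mem_words.
rewrite (bigD1 (Ordinal (n:=N.+1) (m:=size v) hv)) //= eqxx mul1n big1 ?addn0 //.
move=> k hk; case: eqP => [e|]; last by rewrite mul0n.
by move: hk; rewrite -(inj_eq val_inj) /= e eqxx.
Qed.

Lemma count_sum (P : pred lpath) s : count P s = (\sum_(w <- s) P w)%N.
Proof. by elim: s => [|x s IH] /=; rewrite ?big_nil ?big_cons ?IH. Qed.

Lemma partition (L : seq lpath) (f : lpath -> lpath) (P : pred lpath) N :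
  (forall s, s \in L -> size (f s) <= N)%N ->
  count (fun s => P (f s)) L =
  (\sum_(k < N.+1) \sum_(w <- words k) P w * count (fun s => f s == w) L)%N.
Proof.
elim: L => [|s L IH] hL.
  by rewrite big1 // => k _; rewrite big1 // => w _; rewrite muln0.
rewrite /= IH; last by move=> s' hs'; apply: hL; rewrite in_cons hs' orbT.
have -> : (\sum_(k < N.+1) \sum_(w <- words k) P w * ((f s == w) + count (fun s0 => f s0 == w) L)
  = \sum_(k < N.+1) \sum_(w <- words k) P w * (f s == w)
  + \sum_(k < N.+1) \sum_(w <- words k) P w * count (fun s0 => f s0 == w) L)%N.
  rewrite -big_split; apply: eq_bigr => k _.
  by rewrite -big_split; apply: eq_bigr => w _; rewrite mulnDr.
rewrite sum_words_single //.
by apply: hL; rewrite in_cons eqxx.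
Qed.

Definition Ncnt n r := count (fun s => has_cdeg s r) (words n).

Lemma Ncnt_rec n r : Ncnt n.+2 r.+1 =
  (\sum_(k < n.+3) 4 * ddn n.+2 (2 * k) * Ncnt k r)%N.
Proof.
rewrite /Ncnt.
rewrite (@eq_in_count _ _ (fun s => has_cdeg (PhiL s) r)); last first.
  by move=> s; rewrite mem_words => /eqP hs; rewrite cdegS // hs.
rewrite (@partition _ PhiL (fun w => has_cdeg w r) n.+2); last first.
  by move=> s; rewrite mem_words => /eqP hs; rewrite -hs size_PhiL.
apply: eq_bigr => k _.
rewrite count_sum big_distrr /=.
rewrite big_seq_cond [RHS]big_seq_cond; apply: eq_bigr => w.
rewrite andbT mem_words => /eqP hw.
case: w hw => [|c w] hw.
  by rewrite cdeg_nil mul0n muln0.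
rewrite fib -hw /=; case: (has_cdeg _ _) => /=; set t := ddn _ _; lia.
Qed.

Lemma Ncnt0 r : Ncnt 0 r = 0%N.
Proof. by rewrite /Ncnt /= cdeg_nil. Qed.

Lemma main r n : (Ncnt n r)%:Z = 4 ^+ r.+1 * Asum r n.
Proof.
elim: r n => [|r IH] n.
  rewrite A0 /Ncnt.
  rewrite (@eq_in_count _ _ (fun _ => n == 1%N)); last first.
    by move=> s; rewrite mem_words => /eqP hs; rewrite cdeg0 hs.
  case: eqP => [->|_]; first by [].
  by rewrite count_false mulr0.
case: n => [|[|n]].
- by rewrite Ncnt0 /Asum big_nat1 !mul0r mulr0.
- rewrite /Ncnt (@eq_in_count _ _ (fun _ => false)); last first.
    by move=> s; rewrite mem_words => /eqP hs; rewrite cdeg_size1.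
  rewrite count_false /Asum big_nat_recr //= big_nat1 mul0r add0r bb_gt ?mulr0 //.
  by rewrite mul1n -[1%N]/(2 ^ 0)%N ltn_exp2l.
rewrite Ncnt_rec Arec.
rewrite (big_morph Posz PoszD (erefl 0%:Z)) mulr_sumr.
apply: eq_bigr => k _.
rewrite !PoszM IH !exprS.
have -> : Posz 4 = 4 by [].
ring.
Qed.

Theorem proposition5 (n r : nat) (hn : (1 <= n)%N) :
  (#|[set t : n.-tuple dir | has_cdeg (tval t) r]|)%:Z =
  4 ^+ r.+1 *
    \sum_(0 <= lam < n.+1)
       (lam%:Z * (-1) ^+ (lam.-1) *
        (binomz (2 * n - 1) (n%:Z - (lam * 2 ^ r)%N%:Z)
         - binomz (2 * n - 1) (n%:Z - (lam * 2 ^ r)%N%:Z - 1))).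
Proof.
rewrite (card_words (fun s => has_cdeg s r)).
exact: main.
Qed.
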